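(* Let $c\in(0,1)$ and let $\sigma>0$ satisfy $C_{\mathrm{BS}}(\sigma)=c$. For $y>0$ define $$G(y)=d_1^{-1}\!\left(\Phi^{-1}\!\left(\frac{c}{C_{\mathcal D}(y)}\right)\right).$$ If $U\ge\sigma$ (i.e. $U$ is an upper bound of the implied volatility, e.g. $U=U(c)$ for an upper-bound function $U$), then $c/C_{\mathcal D}(U)\in(0,1)$, $G(U)$ is well defined, and $$L_2(c)\le G(U)\le\sigma,\qquad\text{where } L_2(c)=d_1^{-1}(\Phi^{-1}(c)).$$
   Context: Fix $k\ge 0$. Let $\Phi$ and $\phi$ denote the standard normal distribution function and density. For $\sigma>0$ put $d_1(\sigma)=-k/\sigma+\sigma/2$, $d_2(\sigma)=-k/\sigma-\sigma/2$, and $C_{\mathrm{BS}}(\sigma)=\Phi(d_1(\sigma))-e^k\,\Phi(d_2(\sigma))$, a strictly increasing bijection from $(0,\infty)$ onto $(0,1)$; for $c\in(0,1)$ the implied volatility is the unique $\sigma>0$ with $C_{\mathrm{BS}}(\sigma)=c$. The price-to-delta ratio is $C_{\mathcal D}(y)=C_{\mathrm{BS}}(y)/\Phi(d_1(y))$. The function $d_1^{-1}(x)=x+\sqrt{x^2+2k}$ (which equals $2\max(x,0)$ when $k=0$) is the inverse of $d_1$. *)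

(* Defs.v *)
From Stdlib Require Import Reals Lra ClassicalEpsilon.
From Coquelicot Require Import Coquelicot.
Open Scope R_scope.

Definition phi (x : R) : R := exp (- x ^ 2 / 2) / sqrt (2 * PI).

Definition Phi (x : R) : R :=
  RInt_gen phi (Rbar_locally m_infty) (at_point x).

(* quantile function: some x with Phi x = p (unique when p in (0,1),
   since Phi is a strictly increasing bijection R -> (0,1)) *)
Definition Phi_inv (p : R) : R :=
  epsilon (inhabits 0) (fun x => Phi x = p).

Definition d1 (k s : R) : R := - k / s + s / 2.
Definition d2 (k s : R) : R := - k / s - s / 2.

Definition C_BS (k s : R) : R := Phi (d1 k s) - exp k * Phi (d2 k s).

Definition C_D (k y : R) : R := C_BS k y / Phi (d1 k y).

Definition d1_inv (k x : R) : R := x + sqrt (x ^ 2 + 2 * k).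

Definition G (k c y : R) : R := d1_inv k (Phi_inv (c / C_D k y)).

Definition L2 (k c : R) : R := d1_inv k (Phi_inv c).

(* Main.v *)
From Pilot Require Import Defs.
From Stdlib Require Import Reals Lra ClassicalEpsilon FunctionalExtensionality.
From Coquelicot Require Import Coquelicot.
Open Scope R_scope.
Import Pilot.Defs.

Definition g0 (s : R) : R := exp (- s ^ 2 / 2).

Lemma g0_pos x : 0 < g0 x.
Proof. apply exp_pos. Qed.

Lemma cont_of_ex_derive (f : R -> R) x : ex_derive f x -> continuous f x.
Proof. intros H. apply (ex_derive_continuous (K:=R_AbsRing) (V:=R_NormedModule)). exact H. Qed.

Lemma g0_cont x : continuous g0 x.
Proof. apply cont_of_ex_derive. unfold g0. auto_derive. auto. Qed.

Lemma ex_RInt_g0 a b : ex_RInt g0 a b.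
Proof. apply (ex_RInt_continuous (V:=R_CompleteNormedModule)). intros; apply g0_cont. Qed.

Definition E (x : R) : R := RInt g0 0 x.

Lemma E_deriv x : is_derive E x (g0 x).
Proof.
  apply (is_derive_RInt g0 E 0 x).
  - apply filter_forall. intros b. apply (RInt_correct (V:=R_CompleteNormedModule)), ex_RInt_g0.
  - apply g0_cont.
Qed.

Lemma E_diff a b : RInt g0 a b = E b - E a.
Proof.
  unfold E.
  assert (H : RInt g0 0 a + RInt g0 a b = RInt g0 0 b)
    by exact (RInt_Chasles (V:=R_CompleteNormedModule) g0 0 a b (ex_RInt_g0 _ _) (ex_RInt_g0 _ _)).
  lra.
Qed.

Lemma mono_deriv f df a b :
  a <= b ->
  (forall x, a <= x <= b -> is_derive f x (df x)) ->
  (forall x, a <= x <= b -> 0 <= df x) -> f a <= f b.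
Proof.
  intros Hab Hd Hp.
  destruct (MVT_gen f a b df) as [c [Hc Heq]].
  - intros x Hx. apply Hd. rewrite Rmin_left, Rmax_right in Hx by lra. lra.
  - intros x Hx. rewrite Rmin_left, Rmax_right in Hx by lra.
    apply continuity_pt_filterlim. apply cont_of_ex_derive.
    eexists. apply Hd; lra.
  - rewrite Rmin_left, Rmax_right in Hc by lra.
    assert (0 <= df c) by (apply Hp; lra).
    assert (0 <= df c * (b - a)) by (apply Rmult_le_pos; lra). lra.
Qed.

Lemma smono_deriv f df a b :
  a < b ->
  (forall x, a <= x <= b -> is_derive f x (df x)) ->
  (forall x, a <= x <= b -> 0 < df x) -> f a < f b.
Proof.
  intros Hab Hd Hp.
  destruct (MVT_gen f a b df) as [c [Hc Heq]].
  - intros x Hx. apply Hd. rewrite Rmin_left, Rmax_right in Hx by lra. lra.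
  - intros x Hx. rewrite Rmin_left, Rmax_right in Hx by lra.
    apply continuity_pt_filterlim. apply cont_of_ex_derive.
    eexists. apply Hd; lra.
  - rewrite Rmin_left, Rmax_right in Hc by lra.
    assert (0 < df c) by (apply Hp; lra).
    assert (0 < df c * (b - a)) by (apply Rmult_lt_0_compat; lra). lra.
Qed.

Lemma E_incr a b : a <= b -> E a <= E b.
Proof.
  intros H. apply (mono_deriv E g0); auto.
  intros; apply E_deriv. intros; left; apply g0_pos.
Qed.

Lemma E_odd x : E (- x) = - E x.
Proof.
  unfold E.
  assert (H := RInt_comp_lin (V:=R_CompleteNormedModule) g0 (-1) 0 0 x).
  replace (-1 * 0 + 0) with 0 in H by ring.
  replace (-1 * x + 0) with (- x) in H by ring.
  rewrite <- H by apply ex_RInt_g0.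
  rewrite (RInt_ext (V:=R_CompleteNormedModule) _ (fun y => scal (-1) (g0 y))).
  - rewrite (RInt_scal (V:=R_CompleteNormedModule)) by apply ex_RInt_g0. change (scal ?a ?b) with (a * b). ring.
  - intros y _. f_equal. unfold g0. f_equal. field.
Qed.

Definition fp (u t : R) : R := exp (- (u ^ 2 * (1 + t ^ 2)) / 2) / (1 + t ^ 2).
Definition dfp (u t : R) : R := - u * exp (- (u ^ 2 * (1 + t ^ 2)) / 2).

Lemma fp_deriv u t : is_derive (fun z => fp z t) u (dfp u t).
Proof.
  unfold fp, dfp. auto_derive; auto. simpl.
  match goal with |- ?a = ?b => change (@eq R a b) end.
  unfold Rdiv. field. nra.
Qed.

Lemma dfp_cont x t : continuity_2d_pt dfp x t.
Proof.
  unfold dfp.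
  apply continuity_2d_pt_mult.
  - apply continuity_2d_pt_opp, continuity_2d_pt_id1.
  - apply (continuity_1d_2d_pt_comp exp (fun u v => - (u ^ 2 * (1 + v ^ 2)) / 2)).
    + apply derivable_continuous_pt, derivable_pt_exp.
    + apply (continuity_2d_pt_ext (fun u v => (u * u * (1 + v * v)) * (- / 2))).
      { intros; simpl; field. }
      apply continuity_2d_pt_mult; [| apply continuity_2d_pt_const].
      apply continuity_2d_pt_mult.
      * apply continuity_2d_pt_mult; apply continuity_2d_pt_id1.
      * apply continuity_2d_pt_plus; [apply continuity_2d_pt_const|].
        apply continuity_2d_pt_mult; apply continuity_2d_pt_id2.
Qed.

Definition F (x : R) : R := RInt (fp x) 0 1.

Lemma fp_cont u t : continuous (fp u) t.
Proof.
  apply (ex_derive_continuous (K:=R_AbsRing) (V:=R_NormedModule)).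
  unfold fp. auto_derive. simpl. nra.
Qed.

Lemma ex_RInt_fp u a b : ex_RInt (fp u) a b.
Proof. apply (ex_RInt_continuous (V:=R_CompleteNormedModule)). intros; apply fp_cont. Qed.

Lemma F_deriv (x : R) : is_derive F x (- g0 x * E x).
Proof.
  assert (H := is_derive_RInt_param fp 0 1 x).
  unfold F.
  replace (- g0 x * E x) with (RInt (fun t => Derive (fun u => fp u t) x) 0 1).
  - apply H.
    + apply filter_forall. intros y t _. eexists. apply fp_deriv.
    + intros t _. apply (continuity_2d_pt_ext dfp).
      { intros u v. symmetry. apply is_derive_unique, fp_deriv. }
      apply dfp_cont.
    + apply filter_forall. intros y. apply ex_RInt_fp.
  - rewrite (RInt_ext (V:=R_CompleteNormedModule) _ (fun t => scal (- g0 x) (scal x (g0 (x * t + 0))))).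
    + rewrite (RInt_scal (V:=R_CompleteNormedModule)).
      * rewrite (RInt_comp_lin (V:=R_CompleteNormedModule)).
        -- replace (x * 0 + 0) with 0 by ring. replace (x * 1 + 0) with x by ring. reflexivity.
        -- apply ex_RInt_g0.
      * apply (ex_RInt_continuous (V:=R_CompleteNormedModule)). intros.
        apply (ex_derive_continuous (K:=R_AbsRing) (V:=R_NormedModule)).
        unfold g0. change scal with (@mult R_Ring). unfold mult; simpl. auto_derive. auto.
    + intros t _. replace (Derive (fun u : R => fp u t) x) with (dfp x t) by (symmetry; apply is_derive_unique, fp_deriv).
      unfold dfp, g0.
      replace (- (x ^ 2 * (1 + t ^ 2)) / 2) with (- x ^ 2 / 2 + - (x * t + 0) ^ 2 / 2) by field.
      rewrite exp_plus. unfold scal; simpl; unfold mult; simpl.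
      match goal with |- ?a = ?b => change (@eq R a b) end. ring.
Qed.
Ltac req := match goal with |- ?a = ?b => change (@eq R a b) end.


Lemma H_const x : E x * E x + 2 * F x = PI / 2.
Proof.
  set (H := fun x => E x * E x + 2 * F x).
  assert (Hd : forall x, is_derive H x 0).
  { intros y. unfold H.
    apply is_derive_ext with (f := fun x => plus (mult (E x) (E x)) (2 * F x)).
    { intros; reflexivity. }
    replace 0 with (plus (plus (mult (g0 y) (E y)) (mult (E y) (g0 y))) (2 * (- g0 y * E y))).
    - apply (is_derive_plus (K:=R_AbsRing) (V:=R_NormedModule)).
      + apply (is_derive_mult (K:=R_AbsRing)); try apply E_deriv.
        intros; apply Rmult_comm.
      + apply is_derive_scal, F_deriv.
    - unfold plus, mult; simpl. req. ring. }
  assert (H0 : H 0 = PI / 2).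
  { unfold H, E. rewrite RInt_point. unfold F.
    rewrite (RInt_ext (V:=R_CompleteNormedModule) _ (fun t => / (1 + t ^ 2))).
    - rewrite (is_RInt_unique (V:=R_CompleteNormedModule) _ 0 1 (atan 1 - atan 0)).
      + rewrite atan_1, atan_0. change zero with 0. lra.
      + apply (is_RInt_derive (V:=R_CompleteNormedModule) atan).
        * intros t _. apply is_derive_Reals, derivable_pt_lim_atan.
        * intros t _. apply (ex_derive_continuous (K:=R_AbsRing) (V:=R_NormedModule)).
          auto_derive. nra.
    - intros t _. unfold fp.
      replace (- (0 ^ 2 * (1 + t ^ 2)) / 2) with 0 by field. rewrite exp_0. req. field. nra. }
  destruct (MVT_gen H 0 x (fun _ => 0)) as [c [_ Hc]].
  - intros; apply Hd.
  - intros. apply continuity_pt_filterlim.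
    apply (ex_derive_continuous (K:=R_AbsRing) (V:=R_NormedModule)). eexists; apply Hd.
  - fold (H x). lra.
Qed.

Lemma F_ge0 x : 0 <= F x.
Proof.
  apply RInt_ge_0; [lra | apply ex_RInt_fp |].
  intros t _. unfold fp. apply Rlt_le, Rdiv_lt_0_compat; [apply exp_pos | nra].
Qed.

Lemma E_le x : E x <= sqrt (PI / 2).
Proof.
  assert (H := H_const x). assert (H2 := F_ge0 x).
  assert (HP := PI_RGT_0).
  assert (Hs := sqrt_sqrt (PI / 2) ltac:(lra)).
  assert (Hs0 := sqrt_pos (PI / 2)).
  destruct (Rle_or_lt (E x) (sqrt (PI / 2))); auto. nra.
Qed.

Lemma E_diff_le a b : E b - E a <= sqrt (2 * PI).
Proof.
  assert (H1 := E_le b). assert (H2 := E_le (- a)). rewrite E_odd in H2.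
  replace (2 * PI) with (4 * (PI / 2)) by field.
  rewrite sqrt_mult by (try lra; assert (HP := PI_RGT_0); lra).
  replace (sqrt 4) with 2. lra.
  replace 4 with (2 * 2) by ring. rewrite sqrt_square; lra.
Qed.

Lemma sq2pi_pos : 0 < sqrt (2 * PI).
Proof. apply sqrt_lt_R0. assert (H := PI_RGT_0). lra. Qed.

Definition Gd (x : R) : R := E x / sqrt (2 * PI).

Lemma phi_pos x : 0 < phi x.
Proof. unfold phi. apply Rdiv_lt_0_compat; [apply exp_pos | apply sq2pi_pos]. Qed.

Lemma phi_cont x : continuous phi x.
Proof.
  apply (ex_derive_continuous (K:=R_AbsRing) (V:=R_NormedModule)).
  unfold phi. auto_derive. assert (H := sq2pi_pos). lra.
Qed.

Lemma Gd_deriv x : is_derive Gd x (phi x).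
Proof.
  apply is_derive_ext with (f := fun x => / sqrt (2 * PI) * E x).
  { intros t. unfold Gd. req. field. assert (H := sq2pi_pos). lra. }
  replace (phi x) with (/ sqrt (2 * PI) * g0 x).
  - apply is_derive_scal, E_deriv.
  - unfold phi, g0. field. assert (H := sq2pi_pos). lra.
Qed.

Lemma Gd_diff_le a b : Gd b - Gd a <= 1.
Proof.
  unfold Gd. assert (H := sq2pi_pos). assert (H2 := E_diff_le a b).
  replace (E b / sqrt (2 * PI) - E a / sqrt (2 * PI)) with ((E b - E a) / sqrt (2 * PI)) by (unfold Rdiv; ring).
  apply (Rmult_le_reg_r (sqrt (2*PI))); [lra|]. unfold Rdiv. rewrite Rmult_assoc, Rinv_l by lra. lra.
Qed.

Lemma Gd_lt a b : a < b -> Gd a < Gd b.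
Proof.
  intros H. apply (smono_deriv Gd phi); auto.
  intros; apply Gd_deriv. intros; apply phi_pos.
Qed.

Lemma Gd_le a b : a <= b -> Gd a <= Gd b.
Proof. intros [H|H]. left; apply Gd_lt; auto. subst; lra. Qed.

Definition useq (n : nat) : R := Gd (- INR n).

Lemma useq_decr n : useq (S n) <= useq n.
Proof. unfold useq. apply Gd_le. rewrite S_INR. lra. Qed.

Lemma useq_ex : ex_finite_lim_seq useq.
Proof.
  apply (ex_finite_lim_seq_decr useq (Gd 0 - 1)).
  - apply useq_decr.
  - intros n. unfold useq. assert (H := Gd_diff_le (- INR n) 0). lra.
Qed.

Definition la : R := real (Lim_seq useq).

Lemma la_lim : is_lim_seq useq la.
Proof.
  unfold la. assert (H := Lim_seq_correct' useq useq_ex).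
  destruct useq_ex as [l Hl]. rewrite (is_lim_seq_unique _ _ Hl). simpl. exact Hl.
Qed.

Lemma la_le x : la <= Gd x.
Proof.
  destruct (INR_unbounded (- x)) as [n Hn].
  apply Rle_trans with (useq n).
  - apply is_lim_seq_decr_compare; [apply la_lim | apply useq_decr].
  - unfold useq. apply Gd_le. lra.
Qed.

Lemma Gd_lim : filterlim Gd (Rbar_locally m_infty) (locally la).
Proof.
  intros P [eps HP].
  assert (H := proj2 (is_lim_seq_spec useq la) la_lim eps).
  destruct H as [N HN].
  exists (- INR N). intros x Hx. apply HP.
  assert (H1 := HN N (le_n N)). assert (H2 := la_le x).
  assert (H3 : Gd x <= useq N) by (unfold useq; apply Gd_le; lra).
  change (Rabs (Gd x - la) < eps). rewrite Rabs_right by lra.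
  rewrite Rabs_right in H1 by (unfold useq in *; lra). unfold useq in *. lra.
Qed.

Lemma at_point_filter' (x : R) : ProperFilter' (at_point x).
Proof.
  constructor.
  - unfold at_point. auto.
  - constructor; unfold at_point; auto.
Qed.

Lemma Derive_Gd : Derive Gd = phi.
Proof. apply functional_extensionality. intros x. apply is_derive_unique, Gd_deriv. Qed.

Lemma Phi_eq x : Phi x = Gd x - la.
Proof.
  unfold Phi.
  assert (HP : is_RInt_gen phi (Rbar_locally m_infty) (at_point x) (Gd x - la)).
  { rewrite <- Derive_Gd.
    apply (@is_RInt_gen_Derive (Rbar_locally m_infty) (at_point x) (@filter_filter _ _ (Rbar_locally_filter _))
            (@filter_filter' _ _ (at_point_filter' x))).
    - apply filter_forall. intros ab t _. eexists; apply Gd_deriv.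
    - apply filter_forall. intros ab t _. rewrite Derive_Gd. apply phi_cont.
    - apply Gd_lim.
    - intros P HP. unfold filtermap, at_point. apply locally_singleton. exact HP. }
  exact (@is_RInt_gen_unique R_CompleteNormedModule _ _
     (Proper_StrongProper _ (Rbar_locally_filter _)) (at_point_filter' x) phi _ HP).
Qed.

Lemma Phi_deriv x : is_derive Phi x (phi x).
Proof.
  apply is_derive_ext with (f := fun t => minus (Gd t) la).
  { intros t. rewrite Phi_eq. reflexivity. }
  replace (phi x) with (minus (phi x) 0) by (unfold minus, plus, opp; simpl; req; ring).
  apply (is_derive_minus (K:=R_AbsRing) (V:=R_NormedModule)).
  - apply Gd_deriv.
  - apply (is_derive_const (K:=R_AbsRing) (V:=R_NormedModule)).
Qed.

Lemma Phi_lt a b : a < b -> Phi a < Phi b.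
Proof. intros H. rewrite !Phi_eq. assert (Gd a < Gd b) by (apply Gd_lt; auto). lra. Qed.

Lemma Phi_le a b : a <= b -> Phi a <= Phi b.
Proof. intros [H|H]. left; apply Phi_lt; auto. subst; lra. Qed.

Lemma Phi_pos x : 0 < Phi x.
Proof.
  rewrite Phi_eq. assert (H1 := la_le (x - 1)). assert (H2 : Gd (x - 1) < Gd x) by (apply Gd_lt; lra). lra.
Qed.

Lemma useq_eventually (e : R) : 0 < e -> exists n, useq n < la + e.
Proof.
  intros He.
  destruct (proj2 (is_lim_seq_spec useq la) la_lim (mkposreal e He)) as [N HN].
  exists N. assert (H := HN N (le_n N)). simpl in H.
  apply Rabs_def2 in H. lra.
Qed.

Lemma Phi_lt1 x : Phi x < 1.
Proof.
  rewrite Phi_eq.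
  assert (H1 : Gd x < Gd (x + 1)) by (apply Gd_lt; lra).
  destruct (Rle_or_lt (Gd (x + 1) - 1) la) as [H|H]. lra.
  destruct (useq_eventually (Gd (x + 1) - 1 - la)) as [n Hn]. lra.
  assert (H2 := Gd_diff_le (- INR n) (x + 1)). unfold useq in Hn. lra.
Qed.

Lemma Phi_small p : 0 < p -> exists x, Phi x < p.
Proof.
  intros Hp. destruct (useq_eventually p Hp) as [n Hn].
  exists (- INR n). rewrite Phi_eq. unfold useq in Hn. lra.
Qed.

Lemma Phi_continuity : continuity Phi.
Proof.
  intros x. apply continuity_pt_filterlim.
  apply (ex_derive_continuous (K:=R_AbsRing) (V:=R_NormedModule)). eexists; apply Phi_deriv.
Qed.

Lemma Phi_inv_spec p b : 0 < p -> p <= Phi b -> Phi (Phi_inv p) = p /\ Phi_inv p <= b.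
Proof.
  intros Hp Hb.
  destruct (Phi_small p Hp) as [a Ha].
  assert (Hab : a < b).
  { destruct (Rlt_or_le a b); auto. assert (Phi b <= Phi a) by (apply Phi_le; auto). lra. }
  assert (Hex : exists x, Phi x = p).
  { destruct (IVT_gen Phi a b p Phi_continuity) as [x [_ Hx]].
    - rewrite Rmin_left, Rmax_right by lra. lra.
    - exists x; auto. }
  assert (HP : Phi (Phi_inv p) = p) by (unfold Phi_inv; apply epsilon_spec; auto).
  split; auto.
  destruct (Rle_or_lt (Phi_inv p) b) as [H|H]; auto.
  assert (Phi b < Phi (Phi_inv p)) by (apply Phi_lt; auto). lra.
Qed.

Lemma Phi_le_inv x y : Phi x <= Phi y -> x <= y.
Proof.
  intros H. destruct (Rle_or_lt x y) as [H1|H1]; auto.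
  assert (Phi y < Phi x) by (apply Phi_lt; auto). lra.
Qed.

Lemma phi_le1 x : phi x <= 1.
Proof.
  unfold phi.
  assert (H1 : exp (- x ^ 2 / 2) <= 1).
  { rewrite <- exp_0. destruct (Req_dec x 0) as [->|Hx].
    - replace (- 0 ^ 2 / 2) with 0 by field. lra.
    - left. apply exp_increasing. assert (0 < x ^ 2) by nra. lra. }
  assert (H2 : 1 < sqrt (2 * PI)).
  { assert (H := PI_RGT_0). assert (H2 := PI2_3_2). rewrite <- sqrt_1. apply sqrt_lt_1; lra. }
  apply (Rmult_le_reg_r (sqrt (2 * PI))); [lra|]. unfold Rdiv. rewrite Rmult_assoc, Rinv_l by lra.
  assert (exp (- x ^ 2 / 2) >= 0) by (left; apply exp_pos). nra.
Qed.

Lemma phi_rel k s : 0 < s -> exp k * phi (d2 k s) = phi (d1 k s).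
Proof.
  intros Hs. unfold phi.
  assert (E1 : - (d1 k s) ^ 2 / 2 = k + - (d2 k s) ^ 2 / 2) by (unfold d1, d2; field; lra).
  rewrite E1, exp_plus. unfold Rdiv. ring.
Qed.

Lemma d1_deriv k s : 0 < s -> is_derive (d1 k) s (k / s ^ 2 + 1 / 2).
Proof. intros Hs. unfold d1. auto_derive. lra. simpl. req. field. lra. Qed.

Lemma d2_deriv k s : 0 < s -> is_derive (d2 k) s (k / s ^ 2 - 1 / 2).
Proof. intros Hs. unfold d2. auto_derive. lra. simpl. req. field. lra. Qed.

Lemma Phi_comp_deriv f s df : is_derive f s df -> is_derive (fun t => Phi (f t)) s (phi (f s) * df).
Proof.
  intros H. rewrite Rmult_comm. apply (is_derive_comp (K:=R_AbsRing) (V:=R_NormedModule) Phi f s (phi (f s)) df).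
  - apply Phi_deriv.
  - exact H.
Qed.

Lemma CBS_deriv k s : 0 < s -> is_derive (C_BS k) s (phi (d1 k s)).
Proof.
  intros Hs. unfold C_BS.
  apply is_derive_ext with (f := fun t => minus (Phi (d1 k t)) (exp k * Phi (d2 k t))).
  { intros; reflexivity. }
  replace (phi (d1 k s)) with (minus (phi (d1 k s) * (k / s ^ 2 + 1 / 2)) (exp k * (phi (d2 k s) * (k / s ^ 2 - 1 / 2)))).
  - apply (is_derive_minus (K:=R_AbsRing) (V:=R_NormedModule)).
    + apply Phi_comp_deriv, d1_deriv; auto.
    + apply is_derive_scal, Phi_comp_deriv, d2_deriv; auto.
  - unfold minus, plus, opp; simpl. req.
    rewrite <- (phi_rel k s Hs). req. field. lra.
Qed.

Lemma Phi_d12 k s : 0 <= k -> 0 < s -> C_BS k s <= s.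
Proof.
  intros Hk Hs. unfold C_BS.
  assert (Hek : 1 <= exp k) by (assert (H := exp_ineq1_le k); lra).
  assert (H2 := Phi_pos (d2 k s)).
  assert (H : d1 k s - Phi (d1 k s) >= d2 k s - Phi (d2 k s)).
  { apply Rle_ge. apply (mono_deriv (fun t => t - Phi t) (fun t => 1 - phi t)).
    - unfold d1, d2. lra.
    - intros x _. apply is_derive_ext with (f := fun t => minus t (Phi t)). { intros; reflexivity. }
      apply (is_derive_minus (K:=R_AbsRing) (V:=R_NormedModule)).
      + apply (is_derive_id (K:=R_AbsRing)).
      + apply Phi_deriv.
    - intros x _. assert (H := phi_le1 x). lra. }
  assert (Hd : d1 k s - d2 k s = s) by (unfold d1, d2; field; lra).
  nra.
Qed.

Lemma key_ineq k y : 0 <= k -> 0 < y -> (k / y ^ 2 + 1 / 2) * C_BS k y <= Phi (d1 k y).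
Proof.
  intros Hk Hy.
  set (D := k / y ^ 2 + 1 / 2).
  assert (HD : 0 < D).
  { unfold D. assert (0 <= k / y ^ 2) by (apply Rdiv_le_0_compat; [lra | apply pow_lt; lra]). lra. }
  set (K := fun s => Phi (d1 k s) - D * C_BS k s).
  assert (Hmono : forall e, 0 < e <= y -> K e <= K y).
  { intros e He.
    apply (mono_deriv K (fun s => phi (d1 k s) * (k / s ^ 2 + 1 / 2) - D * phi (d1 k s))).
    - lra.
    - intros x Hx. unfold K.
      apply is_derive_ext with (f := fun t => minus (Phi (d1 k t)) (D * C_BS k t)). { intros; reflexivity. }
      apply (is_derive_minus (K:=R_AbsRing) (V:=R_NormedModule)).
      + apply Phi_comp_deriv, d1_deriv; lra.
      + apply is_derive_scal, CBS_deriv; lra.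
    - intros x Hx.
      assert (Hp := phi_pos (d1 k x)).
      assert (k / y ^ 2 <= k / x ^ 2).
      { unfold Rdiv. apply Rmult_le_compat_l; auto. apply Rinv_le_contravar.
        apply pow_lt; lra. apply pow_incr; lra. }
      unfold D. nra. }
  destruct (Rle_or_lt 0 (K y)) as [H|H].
  - unfold K in H. lra.
  - exfalso.
    set (e := Rmin (y / 2) (- K y / (2 * D))).
    assert (He : 0 < e).
    { unfold e. apply Rmin_pos. lra. apply Rdiv_lt_0_compat; lra. }
    assert (He2 : e <= y / 2) by apply Rmin_l.
    assert (He3 : e <= - K y / (2 * D)) by apply Rmin_r.
    assert (H1 := Hmono e ltac:(lra)).
    assert (H2 := Phi_d12 k e Hk He).
    assert (H3 := Phi_pos (d1 k e)).
    assert (H4 : D * e <= - K y / 2).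
    { apply (Rmult_le_compat_l D) in He3; [|lra].
      replace (D * (- K y / (2 * D))) with (- K y / 2) in He3 by (field; lra). lra. }
    assert (HKe : K e = Phi (d1 k e) - D * C_BS k e) by reflexivity.
    assert (H5 : D * C_BS k e <= D * e) by (apply Rmult_le_compat_l; lra).
    lra.
Qed.

Lemma CD_mono k a b : 0 <= k -> 0 < a -> a <= b -> C_D k a <= C_D k b.
Proof.
  intros Hk Ha Hab. unfold C_D.
  apply (mono_deriv (fun s => C_BS k s / Phi (d1 k s))
    (fun s => (phi (d1 k s) * Phi (d1 k s) - C_BS k s * (phi (d1 k s) * (k / s ^ 2 + 1 / 2))) / Phi (d1 k s) ^ 2)).
  - exact Hab.
  - intros x Hx. apply (is_derive_div (C_BS k) (fun s => Phi (d1 k s))).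
    + apply CBS_deriv; lra.
    + apply (Phi_comp_deriv (d1 k)), d1_deriv; lra.
    + apply Rgt_not_eq, Phi_pos.
  - intros x Hx.
    assert (H1 := key_ineq k x Hk ltac:(lra)).
    assert (H2 := phi_pos (d1 k x)). assert (H3 := Phi_pos (d1 k x)).
    apply Rdiv_le_0_compat; [| apply pow_lt; lra].
    replace (phi (d1 k x) * Phi (d1 k x) - C_BS k x * (phi (d1 k x) * (k / x ^ 2 + 1 / 2)))
      with (phi (d1 k x) * (Phi (d1 k x) - (k / x ^ 2 + 1 / 2) * C_BS k x)) by (field; lra).
    apply Rmult_le_pos; lra.
Qed.

Lemma d1_inv_mono k x y : 0 <= k -> x <= y -> d1_inv k x <= d1_inv k y.
Proof.
  intros Hk Hxy. unfold d1_inv.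
  assert (Hx : 0 <= x ^ 2 + 2 * k) by nra.
  assert (Hy : 0 <= y ^ 2 + 2 * k) by nra.
  set (A := sqrt (x ^ 2 + 2 * k)). set (B := sqrt (y ^ 2 + 2 * k)).
  assert (HA : A * A = x ^ 2 + 2 * k) by (apply sqrt_sqrt; auto).
  assert (HB : B * B = y ^ 2 + 2 * k) by (apply sqrt_sqrt; auto).
  assert (HA0 : 0 <= A) by apply sqrt_pos.
  assert (HB0 : 0 <= B) by apply sqrt_pos.
  assert (HBy : 0 <= B + y) by nra.
  nra.
Qed.

Lemma d1_inv_d1 k s : 0 <= k -> 0 < s -> d1_inv k (d1 k s) = s.
Proof.
  intros Hk Hs. unfold d1_inv.
  replace ((d1 k s) ^ 2 + 2 * k) with ((k / s + s / 2) * (k / s + s / 2)) by (unfold d1; field; lra).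
  rewrite sqrt_square.
  - unfold d1. field. lra.
  - assert (0 <= k / s) by (apply Rdiv_le_0_compat; lra). lra.
Qed.

Theorem proposition5 (k c sigma U : R) :
  0 <= k ->
  0 < c < 1 ->
  0 < sigma ->
  C_BS k sigma = c ->
  sigma <= U ->
  (0 < c / C_D k U < 1) /\ L2 k c <= G k c U <= sigma.
Proof.
  intros Hk Hc Hs Hsig HU.
  assert (HU0 : 0 < U) by lra.
  assert (Hmono := CD_mono k sigma U Hk Hs HU).
  assert (P1s := Phi_pos (d1 k sigma)). assert (P1s1 := Phi_lt1 (d1 k sigma)).
  assert (P1U := Phi_pos (d1 k U)).
  assert (HCDs : C_D k sigma = c / Phi (d1 k sigma)) by (unfold C_D; rewrite Hsig; reflexivity).
  assert (HCDs0 : 0 < C_D k sigma) by (rewrite HCDs; apply Rdiv_lt_0_compat; lra).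
  assert (HCDU0 : 0 < C_D k U) by lra.
  assert (Hek : 0 <= exp k * Phi (d2 k U)).
  { apply Rmult_le_pos; [left; apply exp_pos | left; apply Phi_pos]. }
  assert (HCDU1 : C_D k U <= 1).
  { unfold C_D. unfold C_BS at 1. apply (Rmult_le_reg_r (Phi (d1 k U))); auto.
    unfold Rdiv. rewrite Rmult_assoc, Rinv_l by lra. lra. }
  set (p := c / C_D k U).
  assert (Hp0 : 0 < p) by (unfold p; apply Rdiv_lt_0_compat; lra).
  assert (Hcp : c <= p).
  { unfold p. apply (Rmult_le_reg_r (C_D k U)); auto.
    unfold Rdiv. rewrite Rmult_assoc, Rinv_l by lra. nra. }
  assert (Hps : p <= Phi (d1 k sigma)).
  { unfold p. apply (Rmult_le_reg_r (C_D k U)); auto.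
    unfold Rdiv. rewrite Rmult_assoc, Rinv_l by lra.
    apply Rle_trans with (Phi (d1 k sigma) * C_D k sigma).
    - rewrite HCDs. right. field. lra.
    - apply Rmult_le_compat_l; lra. }
  assert (Hcs : c <= Phi (d1 k sigma)).
  { rewrite <- Hsig. unfold C_BS.
    assert (0 <= exp k * Phi (d2 k sigma)) by (apply Rmult_le_pos; [left; apply exp_pos | left; apply Phi_pos]).
    lra. }
  destruct (Phi_inv_spec p (d1 k sigma) Hp0 Hps) as [Hpinv Hpb].
  destruct (Phi_inv_spec c (d1 k sigma) ltac:(lra) Hcs) as [Hcinv _].
  split; [split; lra|].
  unfold L2, G. fold p. split.
  - apply d1_inv_mono; auto. apply Phi_le_inv. rewrite Hpinv, Hcinv. auto.
  - apply Rle_trans with (d1_inv k (d1 k sigma)).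
    + apply d1_inv_mono; auto.
    + rewrite (d1_inv_d1 k sigma Hk Hs). lra.
Qed.
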